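(* The allocation rule $x$ of the two-bidder auction defined below is monotone (for each $i$ and fixed $v_{-i}$, $v_i\mapsto x_i(v_i,v_{-i})$ is non-decreasing), and the Myerson payments $\pi_i(v)=v_ix_i(v)-\int_0^{v_i}x_i(u,v_{-i})\,du$ satisfy $\pi_i(v)\le 1$ for all $v$ and $i$.
   Context: One divisible good, two bidders with values per unit $v_1,v_2\ge0$ and known budgets $B_1=B_2=1$. The allocation $x(v_1,v_2)=(x_1,x_2)$ is symmetric ($x(v_1,v_2)$ is obtained from $x(v_2,v_1)$ by swapping coordinates) and for $v_1\ge v_2$ is given by the first applicable rule: if $v_1=v_2$, $x=(\frac12,\frac12)$; else if $v_2\le\frac13$, $x=(1,0)$; else if $\frac13\le v_2\le1$, $x=(\frac14+\frac1{4v_2},\frac34-\frac1{4v_2})$; else ($v_2\ge1$) $x=(\frac12,\frac12)$. *)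

(* Defs.v *)
From Stdlib Require Import Reals Lra.
Open Scope R_scope.

(* Allocation when the first argument is the (weakly) higher value a >= b, a <> b:
   first applicable rule among v2 <= 1/3, 1/3 <= v2 <= 1, v2 >= 1. *)
Definition alloc_ge (a b : R) : R * R :=
  if Rle_dec b (1/3) then (1, 0)
  else if Rle_dec b 1 then (1/4 + 1/(4*b), 3/4 - 1/(4*b))
  else (1/2, 1/2).

Definition alloc (v1 v2 : R) : R * R :=
  if Req_EM_T v1 v2 then (1/2, 1/2)
  else if Rle_dec v2 v1 then alloc_ge v1 v2
  else let p := alloc_ge v2 v1 in (snd p, fst p).

Definition x1 (v1 v2 : R) : R := fst (alloc v1 v2).
Definition x2 (v1 v2 : R) : R := snd (alloc v1 v2).

(* Main.v *)
Require Import Defs.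
From Stdlib Require Import Reals Lra FunctionalExtensionality.
From Coquelicot Require Import Coquelicot.
Open Scope R_scope.

Definition sA (u : R) : R := snd (alloc_ge 0 u).
Definition fA (v : R) : R := fst (alloc_ge 0 v).

Lemma x1_lt u v2 : u < v2 -> x1 u v2 = sA u.
Proof.
  intro H. unfold x1, alloc, sA.
  destruct (Req_EM_T u v2); [lra|].
  destruct (Rle_dec v2 u); [lra|]. reflexivity.
Qed.

Lemma x1_gt u v2 : v2 < u -> x1 u v2 = fA v2.
Proof.
  intro H. unfold x1, alloc, fA.
  destruct (Req_EM_T u v2); [lra|].
  destruct (Rle_dec v2 u); [|lra]. reflexivity.
Qed.

Lemma x1_eq u v2 : u = v2 -> x1 u v2 = 1/2.
Proof.
  intro H. unfold x1, alloc.
  destruct (Req_EM_T u v2); [reflexivity|lra].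
Qed.

Lemma x2_sym v1 u : x2 v1 u = x1 u v1.
Proof.
  unfold x1, x2, alloc.
  destruct (Req_EM_T v1 u); destruct (Req_EM_T u v1); try reflexivity; try lra.
  destruct (Rle_dec u v1); destruct (Rle_dec v1 u); try lra; reflexivity.
Qed.

Lemma inv_facts u : 1/3 < u -> u <= 1 -> 1 <= /u /\ /u < 3.
Proof.
  intros H1 H2. assert (Hp : 0 < u) by lra.
  assert (u * /u = 1) by (field; lra).
  assert (0 < /u) by (apply Rinv_0_lt_compat; lra).
  split; nra.
Qed.

Lemma sA_bounds u : 0 <= sA u <= 1/2.
Proof.
  unfold sA, alloc_ge. destruct (Rle_dec u (1/3)); simpl; [lra|].
  destruct (Rle_dec u 1); simpl; [|lra].
  destruct (inv_facts u) as [H1 H2]; try lra.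
  replace (1/(4*u)) with (/4 * /u) by (field; lra). lra.
Qed.

Lemma fA_bounds v : 1/2 <= fA v <= 1.
Proof.
  unfold fA, alloc_ge. destruct (Rle_dec v (1/3)); simpl; [lra|].
  destruct (Rle_dec v 1); simpl; [|lra].
  destruct (inv_facts v) as [H1 H2]; try lra.
  replace (1/(4*v)) with (/4 * /v) by (field; lra). lra.
Qed.

Lemma sA_mono u u' : u <= u' -> sA u <= sA u'.
Proof.
  intro H. pose proof (sA_bounds u'). pose proof (sA_bounds u).
  unfold sA, alloc_ge in *.
  destruct (Rle_dec u (1/3)); simpl in *; [lra|].
  destruct (Rle_dec u' (1/3)); simpl in *; [lra|].
  destruct (Rle_dec u 1); destruct (Rle_dec u' 1); simpl in *; try lra.
  assert (/u' <= /u) by (apply Rinv_le_contravar; lra).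
  replace (1/(4*u)) with (/4 * /u) by (field; lra).
  replace (1/(4*u')) with (/4 * /u') by (field; lra). lra.
Qed.

Lemma x1_bounds u v2 : 0 <= x1 u v2 <= 1.
Proof.
  destruct (Rtotal_order u v2) as [H|[H|H]].
  - rewrite x1_lt by lra. pose proof (sA_bounds u). lra.
  - rewrite x1_eq by lra. lra.
  - rewrite x1_gt by lra. pose proof (fA_bounds v2). lra.
Qed.

Lemma x1_mono v2 a b : a <= b -> x1 a v2 <= x1 b v2.
Proof.
  intro H. pose proof (sA_bounds a). pose proof (fA_bounds v2).
  destruct (Rtotal_order a v2) as [Ha|[Ha|Ha]];
  destruct (Rtotal_order b v2) as [Hb|[Hb|Hb]]; try lra.
  - rewrite !x1_lt by lra. apply sA_mono; lra.
  - rewrite x1_lt, x1_eq by lra. lra.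
  - rewrite x1_lt, x1_gt by lra. lra.
  - rewrite !x1_eq by lra. lra.
  - rewrite x1_eq, x1_gt by lra. lra.
  - rewrite !x1_gt by lra. lra.
Qed.

Lemma x1_big u v2 : 1 <= u -> x1 u v2 = fA v2.
Proof.
  intro H.
  destruct (Rtotal_order u v2) as [Hb|[Hb|Hb]].
  - rewrite x1_lt by lra. unfold sA, fA, alloc_ge.
    destruct (Rle_dec u (1/3)); [lra|].
    destruct (Rle_dec v2 (1/3)); [lra|].
    destruct (Rle_dec v2 1); [lra|].
    destruct (Rle_dec u 1); simpl; [|reflexivity].
    assert (u = 1) by lra. subst. field.
  - rewrite x1_eq by lra. unfold fA, alloc_ge.
    destruct (Rle_dec v2 (1/3)); [lra|].
    destruct (Rle_dec v2 1); simpl; [|reflexivity].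
    assert (v2 = 1) by lra. subst. field.
  - rewrite x1_gt by lra. reflexivity.
Qed.

Lemma ex_ext_cont (f g : R -> R) a b : a <= b ->
  (forall x, a < x < b -> f x = g x) ->
  (forall x, a <= x <= b -> continuity_pt g x) -> ex_RInt f a b.
Proof.
  intros Hab He Hc.
  apply (ex_RInt_ext g).
  - intros x Hx. rewrite Rmin_left in Hx by lra. rewrite Rmax_right in Hx by lra.
    symmetry; apply He; lra.
  - apply ex_RInt_Reals_1. apply continuity_implies_RiemannInt; auto.
Qed.

Lemma ex_sA m : 0 <= m -> ex_RInt sA 0 m.
Proof.
  intro Hm.
  destruct (Rle_dec m (1/3)).
  - apply (ex_ext_cont _ (fun _ => 0)); auto.
    + intros x Hx. unfold sA, alloc_ge. destruct (Rle_dec x (1/3)); [reflexivity|lra].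
    + intros; apply continuity_pt_const; intros a b; reflexivity.
  - apply (ex_RInt_Chasles_0 _ 0 (1/3) m); [lra| |].
    + apply (ex_ext_cont _ (fun _ => 0)); try lra.
      * intros x Hx. unfold sA, alloc_ge. destruct (Rle_dec x (1/3)); [reflexivity|lra].
      * intros; apply continuity_pt_const; intros a b; reflexivity.
    + apply (ex_RInt_Chasles_0 _ (1/3) (Rmin m 1) m).
      { split; [apply Rmin_glb; lra | apply Rmin_l]. }
      * apply (ex_ext_cont _ (fun x => 3/4 - 1/(4*x))).
        { apply Rmin_glb; lra. }
        { intros x Hx. assert (x <= 1) by (pose proof (Rmin_r m 1); lra).
          unfold sA, alloc_ge. destruct (Rle_dec x (1/3)); [lra|].
          destruct (Rle_dec x 1); [reflexivity|lra]. }
        { intros x Hx. apply continuity_pt_minus.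
          - apply continuity_pt_const; intros a b; reflexivity.
          - unfold Rdiv. apply continuity_pt_mult.
            + apply continuity_pt_const; intros a b; reflexivity.
            + apply (continuity_pt_inv (fun x => 4 * x)).
              * apply continuity_pt_mult.
                -- apply continuity_pt_const; intros a b; reflexivity.
                -- apply derivable_continuous_pt, derivable_pt_id.
              * lra. }
      * apply (ex_ext_cont _ (fun _ => 1/2)).
        { apply Rmin_l. }
        { intros x Hx. assert (1 < x).
          { destruct (Rle_dec m 1). rewrite Rmin_left in Hx; lra.
            rewrite Rmin_right in Hx; lra. }
          unfold sA, alloc_ge. destruct (Rle_dec x (1/3)); [lra|].
          destruct (Rle_dec x 1); [lra|reflexivity]. }
        { intros; apply continuity_pt_const; intros a b; reflexivity. }
Qed.

Lemma x1_integrable v1 v2 : 0 <= v1 -> 0 <= v2 ->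
  Riemann_integrable (fun u => x1 u v2) 0 v1.
Proof.
  intros H1 H2. apply ex_RInt_Reals_0.
  apply (ex_RInt_Chasles_0 _ 0 (Rmin v1 v2) v1).
  { split; [apply Rmin_glb; lra | apply Rmin_l]. }
  - apply (ex_RInt_ext sA).
    + intros x Hx. rewrite Rmin_left in Hx by (apply Rmin_glb; lra).
      rewrite Rmax_right in Hx by (apply Rmin_glb; lra).
      symmetry. apply x1_lt. pose proof (Rmin_r v1 v2). lra.
    + apply ex_sA. apply Rmin_glb; lra.
  - apply (ex_RInt_ext (fun _ => fA v2)).
    + intros x Hx. rewrite Rmin_left in Hx by apply Rmin_l.
      rewrite Rmax_right in Hx by apply Rmin_l.
      symmetry. apply x1_gt.
      destruct (Rle_dec v1 v2).
      * rewrite Rmin_left in Hx; lra.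
      * rewrite Rmin_right in Hx; lra.
    + apply ex_RInt_const.
Qed.

Lemma x1_payment v1 v2 (pr : Riemann_integrable (fun u => x1 u v2) 0 v1) :
  0 <= v1 -> v1 * x1 v1 v2 - RiemannInt pr <= 1.
Proof.
  intro H1.
  destruct (Rle_dec v1 1).
  - assert (0 * (v1 - 0) <= RiemannInt pr).
    { apply (proj1 (@RiemannInt_const_bound _ _ _ 0 1 pr H1 (fun x _ => x1_bounds x v2))). }
    pose proof (x1_bounds v1 v2). nra.
  - pose (pr1 := RiemannInt_P22 pr (conj (Rle_0_1) (Rlt_le _ _ (Rnot_le_lt _ _ n)))).
    pose (pr2 := RiemannInt_P23 pr (conj (Rle_0_1) (Rlt_le _ _ (Rnot_le_lt _ _ n)))).
    rewrite <- (RiemannInt_P25 pr1 pr2 pr) by lra.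
    assert (0 * (1 - 0) <= RiemannInt pr1).
    { apply (proj1 (@RiemannInt_const_bound _ _ _ 0 1 pr1 Rle_0_1 (fun x _ => x1_bounds x v2))). }
    assert (fA v2 * (v1 - 1) <= RiemannInt pr2).
    { apply (proj1 (@RiemannInt_const_bound _ _ _ (fA v2) (fA v2) pr2 ltac:(lra) ltac:(intros x Hx; cbv beta; rewrite x1_big by lra; lra))). }
    rewrite x1_big by lra. pose proof (fA_bounds v2). nra.
Qed.

Theorem mainTheorem11 :
  (forall v2 a b : R, 0 <= v2 -> 0 <= a -> a <= b -> x1 a v2 <= x1 b v2) /\
  (forall v1 a b : R, 0 <= v1 -> 0 <= a -> a <= b -> x2 v1 a <= x2 v1 b) /\
  (forall v1 v2 : R, 0 <= v1 -> 0 <= v2 ->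
     inhabited (Riemann_integrable (fun u => x1 u v2) 0 v1) /\
     (forall pr : Riemann_integrable (fun u => x1 u v2) 0 v1,
        v1 * x1 v1 v2 - RiemannInt pr <= 1)) /\
  (forall v1 v2 : R, 0 <= v1 -> 0 <= v2 ->
     inhabited (Riemann_integrable (fun u => x2 v1 u) 0 v2) /\
     (forall pr : Riemann_integrable (fun u => x2 v1 u) 0 v2,
        v2 * x2 v1 v2 - RiemannInt pr <= 1)).
Proof.
  split; [|split; [|split]].
  - intros; apply x1_mono; auto.
  - intros; rewrite !x2_sym; apply x1_mono; auto.
  - intros v1 v2 H1 H2. split.
    + constructor. apply x1_integrable; auto.
    + intro pr. apply x1_payment; auto.
  - intros v1 v2 H1 H2.
    assert (E : (fun u => x2 v1 u) = (fun u => x1 u v1)).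
    { apply functional_extensionality; intro; apply x2_sym. }
    rewrite E, x2_sym. split.
    + constructor. apply x1_integrable; auto.
    + intro pr. apply x1_payment; auto.
Qed.
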